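(* Let $s\in S^{\mathbb{N}}$ be a directive sequence and $u=(u_k)$ a fixed point of $s$. Let $b_n$ be the first letter of $u_n$, and assume $|s_{[0,n)}(b_n)|\to\infty$ as $n\to\infty$. Then for every $a\in A$, $$W_a(u_0)=\bigcup_{n\in\mathbb{N}}\Big\{\sum_{k=0}^nM_{[0,k)}t_k\ \Big|\ b_{n+1}\xrightarrow{t_n,s_n}\cdots\xrightarrow{t_0,s_0}a \text{ is a path in } \mathcal{A}\Big\}.$$
   Context: $A=\{0,\dots,d\}$; $S$ is a finite set of unimodular substitutions on $A$ (morphisms of $A^*$ sending letters to non-empty words, extended to infinite words). $\mathrm{ab}(w)\in\mathbb{Z}^{d+1}$ counts letters of $w$, $\mathrm{ab}(\sigma)$ is the matrix of $\sigma$. For $s=(s_k)$: $M_k=\mathrm{ab}(s_k)$, $M_{[0,k)}=M_0\cdots M_{k-1}$ ($M_{[0,0)}=\mathrm{Id}$), $s_{[0,n)}=s_0\circ\cdots\circ s_{n-1}$. A fixed point of $s$ is $(u_k)$ with $s_k(u_{k+1})=u_k$ for all $k$. $W_a(w)=\{\mathrm{ab}(p):pa\text{ prefix of }w\}$. Abelianized prefix automaton $\mathcal{A}$: states $A$, transitions $c\xrightarrow{t,\sigma}e$ ($\sigma\in S$) iff $\sigma(c)=peq$ for words $p,q$ with $\mathrm{ab}(p)=t$; a path $c_{n+1}\xrightarrow{t_n,s_n}\cdots\xrightarrow{t_0,s_0}c_0$ means $c_{k+1}\xrightarrow{t_k,s_k}c_k$ are transitions for all $0\le k\le n$. *)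

(* Defs.v *)
From mathcomp Require Import all_boot all_order all_algebra.
Set Implicit Arguments. Unset Strict Implicit. Unset Printing Implicit Defensive.
Import GRing.Theory Num.Theory.
Local Open Scope ring_scope.

(* Alphabet A = {0,...,d} is 'I_d.+1. Finite words: seq; infinite words: nat -> letter. *)
Notation letter d := ('I_d.+1).
Definition subst (d : nat) := {ffun letter d -> seq (letter d)}.
Definition infword (d : nat) := nat -> letter d.

Definition ab {d : nat} (w : seq (letter d)) : 'cV[int]_d.+1 :=
  \col_i ((count_mem i w)%:Z).

Definition ab_mx {d : nat} (sg : subst d) : 'M[int]_d.+1 :=
  \matrix_(i, j) ((count_mem i (sg j))%:Z).

Definition nonerasing {d : nat} (sg : subst d) : Prop :=
  forall c, (0 < size (sg c))%N.

Definition unimodular {d : nat} (sg : subst d) : Prop :=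
  `|\det (ab_mx sg)| = 1.

Definition subst_word {d : nat} (sg : subst d) (w : seq (letter d)) : seq (letter d) :=
  flatten (map sg w).

(* image of an infinite word: the n-th letter of sg(w) is the n-th letter of
   sg(w_0 ... w_n) (which has length >= n+1 when sg is non-erasing) *)
Definition subst_inf {d : nat} (sg : subst d) (w : infword d) : infword d :=
  fun n => nth ord0 (subst_word sg (mkseq w n.+1)) n.

Definition Mpref {d : nat} (s : nat -> subst d) (k : nat) : 'M[int]_d.+1 :=
  \prod_(i < k) ab_mx (s i).

(* s_{[0,n)}(w) = s_0 ( s_1 ( ... s_{n-1} (w))) *)
Fixpoint spref {d : nat} (s : nat -> subst d) (n : nat) (w : seq (letter d)) : seq (letter d) :=
  match n with
  | 0 => w
  | n'.+1 => spref s n' (subst_word (s n') w)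
  end.

Definition is_fixed_point {d : nat} (s : nat -> subst d) (u : nat -> infword d) : Prop :=
  forall k i, subst_inf (s k) (u k.+1) i = u k i.

Definition Wa {d : nat} (a : letter d) (w : infword d) (v : 'cV[int]_d.+1) : Prop :=
  exists n, w n = a /\ v = ab (mkseq w n).

(* transition c --(t,sg)--> e of the abelianized prefix automaton (sg in S) *)
Definition transition {d : nat} (S : seq (subst d)) (c : letter d) (t : 'cV[int]_d.+1)
    (sg : subst d) (e : letter d) : Prop :=
  sg \in S /\ exists p q, sg c = p ++ e :: q /\ ab p = t.

Definition path_set {d : nat} (S : seq (subst d)) (s : nat -> subst d) (b : letter d)
    (a : letter d) (n : nat) (v : 'cV[int]_d.+1) : Prop :=
  exists (c : nat -> letter d) (t : nat -> 'cV[int]_d.+1),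
    [/\ c n.+1 = b, c 0%N = a,
        (forall k, (k <= n)%N -> transition S (c k.+1) (t k) (s k) (c k))
      & v = \sum_(k < n.+1) Mpref s k *m t k].

(* Main.v *)
Require Import Defs.
From mathcomp Require Import all_boot all_order all_algebra.
From Stdlib Require Import FunctionalExtensionality.
Set Implicit Arguments. Unset Strict Implicit. Unset Printing Implicit Defensive.
Import GRing.Theory Num.Theory.
Local Open Scope ring_scope.

Section Aux.
Variable d : nat.
Implicit Types (w p q : seq (letter d)) (sg : subst d).

Lemma ab_nil : ab (@nil (letter d)) = 0.
Proof. by apply/matrixP => i j; rewrite !mxE. Qed.

Lemma ab_cat p q : ab (p ++ q) = ab p + ab q.
Proof. by apply/matrixP => i j; rewrite !mxE count_cat PoszD. Qed.

Lemma ab_seq1 sg x : ab_mx sg *m ab [:: x] = ab (sg x).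
Proof.
apply/matrixP => i j; rewrite !mxE (bigD1 x) //= big1 => [|k /negbTE kx].
  by rewrite !mxE /= eqxx addn0 addr0 mulr1.
by rewrite !mxE /= eq_sym kx mulr0.
Qed.

Lemma subst_word_cat sg p q : subst_word sg (p ++ q) = subst_word sg p ++ subst_word sg q.
Proof. by rewrite /subst_word map_cat flatten_cat. Qed.

Lemma subst_word1 sg x : subst_word sg [:: x] = sg x.
Proof. by rewrite /subst_word /= cats0. Qed.

Lemma ab_subst sg w : ab (subst_word sg w) = ab_mx sg *m ab w.
Proof.
elim: w => [|x w IH]; first by rewrite /subst_word /= ab_nil mulmx0.
rewrite -cat1s subst_word_cat subst_word1 !ab_cat IH mulmxDr ab_seq1 //.
Qed.

Lemma size_subst sg w : nonerasing sg -> (size w <= size (subst_word sg w))%N.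
Proof.
move=> ne; elim: w => [|x w IH] //=.
rewrite -cat1s subst_word_cat subst_word1 size_cat /=.
by rewrite -add1n leq_add // ne.
Qed.

Variable s : nat -> subst d.

Lemma spref_cat n p q : spref s n (p ++ q) = spref s n p ++ spref s n q.
Proof. by elim: n p q => [|n IH] p q //=; rewrite subst_word_cat IH. Qed.

Lemma spref_nil n : spref s n [::] = [::].
Proof. by elim: n. Qed.

Lemma spref_flat n w : spref s n w = flatten (map (fun x => spref s n [:: x]) w).
Proof.
elim: w => [|x w IH]; first by rewrite spref_nil.
by rewrite -cat1s spref_cat IH.
Qed.

Lemma MprefS n : Mpref s n.+1 = Mpref s n *m ab_mx (s n).
Proof. by rewrite /Mpref big_ord_recr /= mulmxE. Qed.

Lemma ab_spref n w : ab (spref s n w) = Mpref s n *m ab w.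
Proof.
elim: n w => [|n IH] w /=; first by rewrite /Mpref big_ord0 mul1mx.
by rewrite IH ab_subst mulmxA MprefS.
Qed.

End Aux.

Lemma block_lemma (T U : eqType) (x0 : U) (f : T -> seq U) (w : seq T) j :
  (j < size (flatten (map f w)))%N ->
  exists p x q j', [/\ w = p ++ x :: q, (j' < size (f x))%N,
    take j (flatten (map f w)) = flatten (map f p) ++ take j' (f x) &
    nth x0 (flatten (map f w)) j = nth x0 (f x) j'].
Proof.
elim: w j => [|y w IH] j //=.
rewrite size_cat => hj.
case: (ltnP j (size (f y))) => hy.
  exists [::], y, w, j; split => //; first by rewrite take_cat hy.
  by rewrite nth_cat hy.
have hj' : (j - size (f y) < size (flatten (map f w)))%N.
  by rewrite ltn_subLR // addnC.
have [p [x [q [j' [-> h1 h2 h3]]]]] := IH _ hj'.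
exists (y :: p), x, q, j'; split => //=.
  by rewrite take_cat ltnNge hy /= h2 catA.
by rewrite nth_cat ltnNge hy /= h3.
Qed.

Definition is_prefix {d : nat} (x : seq (letter d)) (w : infword d) :=
  forall i, (i < size x)%N -> nth ord0 x i = w i.

Lemma prefix_subst (d : nat) (sg : subst d) (w : infword d) x :
  nonerasing sg -> is_prefix x w -> is_prefix (subst_word sg x) (subst_inf sg w).
Proof.
move=> ne px i hi; rewrite /subst_inf.
have tk : forall m, (m <= maxn (size x) i.+1)%N ->
    mkseq w m = take m (mkseq w (maxn (size x) i.+1)).
  move=> m hm; apply: (@eq_from_nth _ ord0).
    by rewrite size_takel ?size_mkseq.
  move=> k; rewrite size_mkseq => hk; rewrite nth_take // !nth_mkseq //.
  exact: leq_trans hk hm.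
set L := maxn (size x) i.+1.
set y := mkseq w L.
have hx : x = take (size x) y.
  apply: (@eq_from_nth _ ord0).
    by rewrite size_takel // size_mkseq leq_maxl.
  move=> k hk; rewrite nth_take // nth_mkseq ?px //.
  by apply: leq_trans hk (leq_maxl _ _).
have hy : mkseq w i.+1 = take i.+1 y.
  by rewrite /y /L tk // leq_maxr.
have key : forall j, nth ord0 (subst_word sg (take j y)) i =
     if (i < size (subst_word sg (take j y)))%N then nth ord0 (subst_word sg y) i
     else nth ord0 (subst_word sg (take j y)) i.
  move=> j; case: ifP => // h.
  by rewrite -{2}(cat_take_drop j y) subst_word_cat nth_cat h.
rewrite hx in hi *; rewrite key hi hy key ifT //.
apply: leq_trans (size_subst _ ne).
by rewrite size_takel // size_mkseq leq_maxr.
Qed.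

Lemma prefix_spref (d : nat) (s : nat -> subst d) (u : nat -> infword d)
  (ne : forall k, nonerasing (s k)) (Hu : is_fixed_point s u) n x :
  is_prefix x (u n) -> is_prefix (spref s n x) (u 0%N).
Proof.
elim: n x => [|n IH] x //= px; apply: IH.
have -> : u n = subst_inf (s n) (u n.+1).
  by apply: functional_extensionality_dep => i; rewrite Hu.
exact: prefix_subst.
Qed.

Section Main.
Variables (d : nat) (S : seq (subst d)) (s : nat -> subst d).
Hypothesis Hs : forall k, s k \in S.

Lemma path_word (c : nat -> letter d) (t : nat -> 'cV[int]_d.+1) m :
  (forall k, (k < m)%N -> transition S (c k.+1) (t k) (s k) (c k)) ->
  exists P Q, spref s m [:: c m] = P ++ c 0%N :: Q /\
     ab P = \sum_(k < m) Mpref s k *m t k.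
Proof.
elim: m => [|m IH] htr.
  by exists [::], [::]; rewrite big_ord0 ab_nil.
have [P [Q [e1 e2]]] : exists P Q, spref s m [:: c m] = P ++ c 0%N :: Q /\
     ab P = \sum_(k < m) Mpref s k *m t k.
  by apply: IH => k hk; apply: htr; apply: ltnW.
have [_ [p [q [e3 e4]]]] := htr m (ltnSn m).
exists (spref s m p ++ P), (Q ++ spref s m q); split.
  rewrite /= subst_word1 e3 -cat1s !spref_cat e1.
  by rewrite -!catA.
by rewrite ab_cat big_ord_recr /= e2 ab_spref e4 addrC.
Qed.

Lemma desub m (b : letter d) j :
  (j < size (spref s m [:: b]))%N ->
  exists (c : nat -> letter d) (t : nat -> 'cV[int]_d.+1),
    [/\ c m = b, (forall k, (k < m)%N -> transition S (c k.+1) (t k) (s k) (c k)),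
        ab (take j (spref s m [:: b])) = \sum_(k < m) Mpref s k *m t k &
        nth ord0 (spref s m [:: b]) j = c 0%N].
Proof.
elim: m b j => [|m IH] b j.
  case: j => [|j] //= _.
  by exists (fun _ => b), (fun _ => 0); split => //; rewrite big_ord0 ab_nil.
rewrite /= subst_word1 (spref_flat s m (s m b)) => hj.
have [p [x [q [j' [e1 h1 h2 h3]]]]] := block_lemma ord0 hj.
have [c [t [c1 c2 c3 c4]]] := IH x j' h1.
exists (fun k => if k == m.+1 then b else c k),
       (fun k => if k == m then ab p else t k); split.
- by rewrite eqxx.
- move=> k; rewrite ltnS leq_eqVlt => /orP [/eqP ->|hk].
    rewrite eqxx (ltn_eqF (ltnSn m)) c1; split => //.
    by exists p, q; rewrite eqxx.
  rewrite eqSS (ltn_eqF hk) (ltn_eqF (leqW hk)).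
  exact: c2.
- rewrite h2 ab_cat -spref_flat ab_spref c3 big_ord_recr /= eqxx addrC.
  congr (_ + _); apply: eq_bigr => k _.
  by rewrite (ltn_eqF (ltn_ord k)).
- by rewrite h3 c4.
Qed.
End Main.

Theorem lemma3p22 (d : nat) (S : seq (subst d))
    (HS : forall sg, sg \in S -> nonerasing sg /\ unimodular sg)
    (s : nat -> subst d) (Hs : forall k, s k \in S)
    (u : nat -> infword d) (Hu : is_fixed_point s u)
    (Hgrow : forall B : nat, exists N : nat, forall n : nat, (N <= n)%N ->
               (B <= size (spref s n [:: u n 0%N]))%N) :
  forall (a : letter d) (v : 'cV[int]_d.+1),
    Wa a (u 0%N) v <-> exists n : nat, path_set S s (u n.+1 0%N) a n v.
Proof.
have ne : forall k, nonerasing (s k) by move=> k; case: (HS _ (Hs k)).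
have pre : forall n, is_prefix (spref s n [:: u n 0%N]) (u 0%N).
  move=> n; apply: prefix_spref => //.
  by case => [|i] //= _.
have mk : forall n m, (m <= size (spref s n [:: u n 0%N]))%N ->
    mkseq (u 0%N) m = take m (spref s n [:: u n 0%N]).
  move=> n m hm; apply: (@eq_from_nth _ ord0).
    by rewrite size_takel ?size_mkseq.
  move=> k; rewrite size_mkseq => hk; rewrite nth_take // nth_mkseq // pre //.
  exact: leq_trans hk hm.
move=> a v; split.
  move=> [m0 [h0 ->]].
  have [N HN] := Hgrow m0.+1.
  have hsz := HN N.+1 (leqW (leqnn N)).
  have [c [t [c1 c2 c3 c4]]] := desub Hs hsz.
  exists N, c, t; split => //.
  - by rewrite -c4 pre.
  - by rewrite (mk N.+1) ?c3 // ltnW.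
move=> [n [c [t [c1 c0 c2 ->]]]].
have [P [Q [e1 e2]]] := @path_word _ S s c t n.+1 c2.
rewrite c1 in e1.
exists (size P); split.
  have := pre n.+1 (size P); rewrite e1 nth_cat ltnn subnn size_cat /= => <- //.
  by rewrite addnS ltnS leq_addr.
rewrite (mk n.+1); first by rewrite e1 take_size_cat.
by rewrite e1 size_cat leq_addr.
Qed.
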